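(* Let $G=(U,\alpha)$ and $H=(V,\beta)$ be graphs. Then $G$ and $H$ are strongly disjoint if and only if the joining constraint space $\mathcal{N}(G,H)$ has dimension $1$.
   Context: A weight function on finite $U$ is $\alpha:U\times U\to\mathbb{R}$, $\alpha\ge0$, symmetric, summing to $1$; degree $p(u)=\sum_{u'}\alpha(u,u')$; a graph is $G=(U,\alpha)$. Let $S=\{((u,v),(u',v'))\in(U\times V)^2:\alpha(u,u')>0,\ \beta(v,v')>0\}$. The joining constraint space $\mathcal{N}(G,H)$ is the null space of the joining constraint matrix, i.e. the real vector space of functions $\gamma:S\to\mathbb{R}$ (extended by $0$ outside $S$), with $r(u,v)=\sum_{(u',v')}\gamma((u,v),(u',v'))$ and $T=\sum_{(u,v)}r(u,v)$, satisfying the linear equations: $\gamma((u,v),(u',v'))=\gamma((u',v'),(u,v))$; $\sum_v r(u,v)=p(u)T$ for each $u$; $\sum_u r(u,v)=q(v)T$ for each $v$ (where $q$ is the degree of $\beta$); and $p(u)\sum_{y}\gamma((u,v),(u',y))=\alpha(u,u')r(u,v)$, $q(v)\sum_x\gamma((u,v),(x,v'))=\beta(v,v')r(u,v)$ for all $u,u'\in U$, $v,v'\in V$. A weight joining of $\alpha,\beta$ is a weight function $\gamma$ on $U\times V$ satisfying: degree $r$ has marginals $\sum_v r(u,v)=p(u)$, $\sum_u r(u,v)=q(v)$, and the two transition equations above. $G,H$ are strongly disjoint if the only weight joining is $\alpha\otimes\beta$, $(\alpha\otimes\beta)((u,v),(u',v'))=\alpha(u,u')\beta(v,v')$. *)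

(* Defs.v *)
From HB Require Import structures.
From mathcomp Require Import all_boot all_order all_algebra.
From mathcomp Require Import reals.
From mathcomp Require Import ring.
Set Implicit Arguments. Unset Strict Implicit. Unset Printing Implicit Defensive.
Import Order.TTheory GRing.Theory Num.Theory.
Local Open Scope ring_scope.

Section Joinings.
Variable R : realType.

Definition weight_function (U : finType) (a : U -> U -> R) : Prop :=
  (forall u u', 0 <= a u u') /\ (forall u u', a u u' = a u' u) /\
  (\sum_(u : U) \sum_(u' : U) a u u' = 1).

Definition degree (U : finType) (a : U -> U -> R) (u : U) : R :=
  \sum_(u' : U) a u u'.

Variables (U V : finType) (alpha : U -> U -> R) (beta : V -> V -> R).

Let p := degree alpha.
Let q := degree beta.

Definition wtensor (x y : U * V) : R := alpha x.1 y.1 * beta x.2 y.2.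

Definition weight_joining (g : U * V -> U * V -> R) : Prop :=
  let r := degree g in
  [/\ weight_function g,
      (forall u, \sum_(v : V) r (u, v) = p u),
      (forall v, \sum_(u : U) r (u, v) = q v),
      (forall u u' v, p u * \sum_(y : V) g (u, v) (u', y) = alpha u u' * r (u, v))
    & (forall u v v', q v * \sum_(x : U) g (u, v) (x, v') = beta v v' * r (u, v))].

Definition strongly_disjoint : Prop :=
  forall g, weight_joining g -> forall x y, g x y = wtensor x y.

Definition Sset : pred ((U * V) * (U * V)) :=
  fun z => (0 < alpha z.1.1 z.2.1) && (0 < beta z.1.2 z.2.2).

(* Index set of the linear constraints defining N(G,H):
   vanishing outside S, symmetry, the two marginal equations and the two
   transition equations. *)
Definition cidx : finType :=
  (((U * V) * (U * V)) + ((U * V) * (U * V)) + U + V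
    + ((U * V) * U) + ((U * V) * V))%type.

Definition joining_constraints
  (g : {ffun (U * V) * (U * V) -> R^o}) : {ffun cidx -> R^o} :=
  let G x y := g (x, y) in
  let r x := \sum_(y : U * V) G x y in
  let T := \sum_(x : U * V) r x in
  [ffun c : cidx =>
    match c with
    | inl (inl (inl (inl (inl z)))) => if Sset z then 0 else g z
    | inl (inl (inl (inl (inr z)))) => g z - g (z.2, z.1)
    | inl (inl (inl (inr u))) => \sum_(v : V) r (u, v) - p u * T
    | inl (inl (inr v)) => \sum_(u : U) r (u, v) - q v * T
    | inl (inr (uv, u')) =>
        p uv.1 * \sum_(y : V) G uv (u', y) - alpha uv.1 u' * r uv
    | inr (uv, v') =>
        q uv.2 * \sum_(x : U) G uv (x, v') - beta uv.2 v' * r uv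
    end].



(* Sanity check: the constraint map is linear, so the kernel below is the
   genuine null space of the joining constraint matrix. *)
Lemma joining_constraints_linear : linear joining_constraints.
Proof.
move=> a g h.
have sc (x : R^o) : a *: x = a * x by [].
have S2 (I : finType) (F G : I -> R) : \sum_i (a * F i + G i) = a * \sum_i F i + \sum_i G i.
  by rewrite big_split /= mulr_sumr.
apply/ffunP; case=> [[[[[z|z]|u]|v]|[uv u']]|[uv v']]; rewrite /joining_constraints !ffunE /= ?sc.
- by case: (Sset z); rewrite ?mulr0 ?addr0.
- ring.
- under eq_bigr do under eq_bigr do rewrite !ffunE sc.
  under eq_bigr do rewrite S2. rewrite S2.
  under [X in _ - _ * X]eq_bigr do under eq_bigr do rewrite !ffunE sc.
  under [X in _ - _ * X]eq_bigr do rewrite S2. rewrite S2. ring.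
- under eq_bigr do under eq_bigr do rewrite !ffunE sc.
  under eq_bigr do rewrite S2. rewrite S2.
  under [X in _ - _ * X]eq_bigr do under eq_bigr do rewrite !ffunE sc.
  under [X in _ - _ * X]eq_bigr do rewrite S2. rewrite S2. ring.
- under eq_bigr do rewrite !ffunE sc. rewrite S2.
  under [X in _ - _ * X]eq_bigr do rewrite !ffunE sc. rewrite S2. ring.
- under eq_bigr do rewrite !ffunE sc. rewrite S2.
  under [X in _ - _ * X]eq_bigr do rewrite !ffunE sc. rewrite S2. ring.
Qed.

(* The joining constraint space N(G,H): the null space of the joining
   constraint matrix, as a subspace of the real functions on (U x V)^2
   (functions are extended by 0 outside S). *)
Definition joining_constraint_space : {vspace {ffun (U * V) * (U * V) -> R^o}} :=
  lker (linfun joining_constraints).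

End Joinings.

(* Main.v *)
Require Import Defs.
From HB Require Import structures.
From mathcomp Require Import all_boot all_order all_algebra.
From mathcomp Require Import reals ring lra.
Set Implicit Arguments. Unset Strict Implicit. Unset Printing Implicit Defensive.
Import Order.TTheory GRing.Theory Num.Theory.
Local Open Scope ring_scope.

Section Proof.
Variables (R : realType) (U V : finType) (alpha : U -> U -> R) (beta : V -> V -> R).
Hypotheses (hG : weight_function alpha) (hH : weight_function beta).

Local Notation p := (degree alpha).
Local Notation q := (degree beta).
Local Notation FT := {ffun (U * V) * (U * V) -> R^o}.
Local Notation W := (joining_constraint_space alpha beta).

Lemma sum_pair (A B : finType) (F : A * B -> R) :
  \sum_(z : A * B) F z = \sum_(a : A) \sum_(b : B) F (a, b).
Proof. by rewrite pair_bigA; apply: eq_bigr => -[]. Qed.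

Definition rr (g : FT) (x : U * V) : R := \sum_(y : U * V) g (x, y).
Definition TT (g : FT) : R := \sum_(x : U * V) rr g x.

Definition inN (g : FT) : Prop :=
  [/\ (forall z, ~~ Sset alpha beta z -> g z = 0),
      (forall x y, g (x, y) = g (y, x)),
      (forall u, \sum_(v : V) rr g (u, v) = p u * TT g),
      (forall v, \sum_(u : U) rr g (u, v) = q v * TT g)
    & (forall uv u', p uv.1 * \sum_(y : V) g (uv, (u', y)) = alpha uv.1 u' * rr g uv) /\
      (forall uv v', q uv.2 * \sum_(x : U) g (uv, (x, v')) = beta uv.2 v' * rr g uv)].

Lemma memW g : (g \in W) = (joining_constraints alpha beta g == 0).
Proof.
rewrite /joining_constraint_space memv_ker.
pose JL : {linear _ -> _} := HB.pack (joining_constraints alpha beta)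
  (GRing.isLinear.Build _ _ _ _ (joining_constraints alpha beta) (joining_constraints_linear alpha beta)).
by have := lfunE JL g => /= ->.
Qed.

Lemma inNP g : g \in W <-> inN g.
Proof.
rewrite memW; split.
- move/eqP => H.
  have Hc c : joining_constraints alpha beta g c = 0 by rewrite H ffunE.
  split; [| | | |split].
  + move=> z Hz; have := Hc (inl (inl (inl (inl (inl z))))).
    by rewrite ffunE /= (negbTE Hz).
  + move=> x y; have := Hc (inl (inl (inl (inl (inr (x, y)))))).
    by rewrite ffunE /= => /eqP; rewrite subr_eq0 => /eqP.
  + move=> u; have := Hc (inl (inl (inl (inr u)))).
    by rewrite ffunE /= => /eqP; rewrite subr_eq0 => /eqP.
  + move=> v; have := Hc (inl (inl (inr v))).
    by rewrite ffunE /= => /eqP; rewrite subr_eq0 => /eqP.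
  + move=> uv u'; have := Hc (inl (inr (uv, u'))).
    by rewrite ffunE /= => /eqP; rewrite subr_eq0 => /eqP.
  + move=> uv v'; have := Hc (inr (uv, v')).
    by rewrite ffunE /= => /eqP; rewrite subr_eq0 => /eqP.
- case=> H1 H2 H3 H4 [H5 H6]; apply/eqP/ffunP.
  case=> [[[[[z|[x y]]|u]|v]|[uv u']]|[uv v']]; rewrite !ffunE /=.
  + by case: ifP => // /negbT /H1.
  + by rewrite H2 subrr.
  + by have := H3 u; rewrite /rr /TT => ->; rewrite subrr.
  + by have := H4 v; rewrite /rr /TT => ->; rewrite subrr.
  + by have := H5 uv u'; rewrite /rr => ->; rewrite subrr.
  + by have := H6 uv v'; rewrite /rr => ->; rewrite subrr.
Qed.


Definition w0 : FT := [ffun z => alpha z.1.1 z.2.1 * beta z.1.2 z.2.2].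

Lemma sumTT (g : FT) : \sum_z g z = TT g.
Proof. by rewrite sum_pair. Qed.

Lemma sum_p : \sum_u p u = 1.
Proof. by case: hG => _ []. Qed.
Lemma sum_q : \sum_v q v = 1.
Proof. by case: hH => _ []. Qed.

Lemma rr_w0 uv : rr w0 uv = p uv.1 * q uv.2.
Proof.
rewrite /rr sum_pair; under eq_bigr do under eq_bigr do rewrite ffunE /=.
rewrite /degree mulr_suml; apply: eq_bigr => u' _; by rewrite mulr_sumr.
Qed.

Lemma TT_w0 : TT w0 = 1.
Proof.
rewrite /TT sum_pair; under eq_bigr do under eq_bigr do rewrite rr_w0 /=.
under eq_bigr do rewrite -mulr_sumr sum_q mulr1.
exact: sum_p.
Qed.

Lemma w0N : inN w0.
Proof.
case: hG => a0 [asym _]; case: hH => b0 [bsym _].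
split; [| | | |split].
- move=> [[u v] [u' v']]; rewrite /Sset /= ffunE /= negb_and -!leNgt => /orP[] H.
    have -> : alpha u u' = 0 by (apply: le_anti; rewrite a0 andbT; exact: H). by rewrite mul0r.
  have -> : beta v v' = 0 by (apply: le_anti; rewrite b0 andbT; exact: H). by rewrite mulr0.
- by move=> [u v] [u' v']; rewrite !ffunE /= asym bsym.
- move=> u; under eq_bigr do rewrite rr_w0 /=.
  by rewrite -mulr_sumr sum_q TT_w0.
- move=> v; under eq_bigr do rewrite rr_w0 /=.
  by rewrite -mulr_suml sum_p TT_w0 mulrC.
- move=> [u v] u'; under eq_bigr do rewrite ffunE /=.
  rewrite rr_w0 /= -mulr_sumr; rewrite /degree; ring.
- move=> [u v] v'; under eq_bigr do rewrite ffunE /=.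
  rewrite rr_w0 /= -mulr_suml; rewrite /degree; ring.
Qed.

Lemma w0_neq0 : w0 != 0.
Proof.
apply/eqP => H; have := TT_w0; rewrite -sumTT H.
under eq_bigr do rewrite ffunE.
by rewrite big1 // => /eqP; rewrite eq_sym oner_eq0.
Qed.

Lemma N_wj (h : FT) : inN h -> TT h = 1 -> (forall z, 0 <= h z) ->
  weight_joining alpha beta (fun x y => h (x, y)).
Proof.
case=> H1 H2 H3 H4 [H5 H6] HT Hnn; split.
- split; first by move=> *; apply: Hnn.
  split; first exact: H2.
  exact: HT.
- by move=> u; have := H3 u; rewrite HT mulr1.
- by move=> v; have := H4 v; rewrite HT mulr1.
- by move=> u u' v; exact: (H5 (u, v) u').
- by move=> u v v'; exact: (H6 (u, v) v').
Qed.


Lemma p_ge0 u : 0 <= p u.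
Proof. case: hG => a0 _; apply: sumr_ge0 => *; exact: a0. Qed.
Lemma q_ge0 v : 0 <= q v.
Proof. case: hH => b0 _; apply: sumr_ge0 => *; exact: b0. Qed.

Lemma wj_N (g : U * V -> U * V -> R) : weight_joining alpha beta g ->
  inN [ffun z => g z.1 z.2] /\ TT [ffun z => g z.1 z.2] = 1.
Proof.
case: hG => a0 [asym _]; case: hH => b0 [bsym _].
case=> [[g0 [gsym g1]] H3 H4 H5 H6].
have rrE x : rr [ffun z => g z.1 z.2] x = degree g x.
  by rewrite /rr /degree; apply: eq_bigr => y _; rewrite ffunE.
have HT : TT [ffun z => g z.1 z.2] = 1.
  by rewrite /TT -g1; apply: eq_bigr => x _; rewrite rrE.
have dg0 x : 0 <= degree g x by apply: sumr_ge0 => *.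
split=> //; split; [| | | |split].
- move=> [[u v] [u' v']]; rewrite /Sset /= ffunE /= negb_and -!leNgt => /orP[] H.
  + have a00 : alpha u u' = 0 by (apply: le_anti; rewrite a0 andbT; exact: H).
    have := H5 u u' v; rewrite a00 mul0r => /eqP; rewrite mulf_eq0 => /orP[/eqP p0|].
    * have := H3 u; rewrite p0 => /eqP; rewrite psumr_eq0 => [/allP Hv|v0 _]; last exact: dg0.
      have := Hv v (mem_index_enum _) => /= ; rewrite /degree psumr_eq0 => [/allP Hy|y _]; last exact: g0.
      by apply/eqP; exact: (Hy (u', v') (mem_index_enum _)).
    * rewrite psumr_eq0 => [/allP Hy|y _]; last exact: g0.
      by apply/eqP; exact: (Hy v' (mem_index_enum _)).
  + have b00 : beta v v' = 0 by (apply: le_anti; rewrite b0 andbT; exact: H).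
    have := H6 u v v'; rewrite b00 mul0r => /eqP; rewrite mulf_eq0 => /orP[/eqP q0|].
    * have := H4 v; rewrite q0 => /eqP; rewrite psumr_eq0 => [/allP Hu|u0 _]; last exact: dg0.
      have := Hu u (mem_index_enum _) => /= ; rewrite /degree psumr_eq0 => [/allP Hy|y _]; last exact: g0.
      by apply/eqP; exact: (Hy (u', v') (mem_index_enum _)).
    * rewrite psumr_eq0 => [/allP Hx|x _]; last exact: g0.
      by apply/eqP; exact: (Hx u' (mem_index_enum _)).
- by move=> x y; rewrite !ffunE /=.
- move=> u; rewrite HT mulr1 -H3; apply: eq_bigr => v _; exact: rrE.
- move=> v; rewrite HT mulr1 -H4; apply: eq_bigr => u _; exact: rrE.
- move=> [u v] u'; rewrite rrE -H5; congr (_ * _); apply: eq_bigr => y _; by rewrite ffunE.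
- move=> [u v] v'; rewrite rrE -H6; congr (_ * _); apply: eq_bigr => y _; by rewrite ffunE.
Qed.


Lemma pos_lb (T : finType) (P : pred T) (f : T -> R) :
  (forall z, P z -> 0 < f z) -> exists2 e, 0 < e & forall z, P z -> e <= f z.
Proof.
move=> Hf; exists (\big[Num.min/1]_(z | P z) f z).
- apply: (big_ind (fun x => 0 < x)) => // x y hx hy; by rewrite lt_min hx hy.
- by move=> z Pz; rewrite (bigD1 z) //= ge_min lexx.
Qed.

Lemma TT_lin (g h : FT) (k : R) : TT (g + k *: h) = TT g + k * TT h.
Proof.
rewrite -!sumTT; under eq_bigr do rewrite !ffunE.
by rewrite big_split /= -mulr_sumr.
Qed.

Lemma W_sub : strongly_disjoint alpha beta -> (W <= <[w0]>)%VS.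
Proof.
move=> SD; have w0W : w0 \in W by apply/inNP; exact: w0N.
apply/subvP => g gW.
pose T := TT g; pose g' := g + (- T) *: w0.
have g'W : g' \in W by rewrite memvD // memvZ.
have Tg' : TT g' = 0 by rewrite TT_lin TT_w0 mulr1 subrr.
have [H1 _ _ _ _] := iffLR (inNP g') g'W.
have [W1 _ _ _ _] := w0N.
have Hpos : forall z, Sset alpha beta z -> 0 < w0 z / (`|g' z| + 1).
  move=> z Sz; apply: divr_gt0; last by rewrite ltr_wpDl.
  rewrite ffunE; move: Sz; rewrite /Sset => /andP[a b]; exact: mulr_gt0.
have [e e0 He] := pos_lb Hpos.
pose h := w0 + e *: g'.
have hW : h \in W by rewrite memvD // memvZ.
have hN := iffLR (inNP h) hW.
have hT : TT h = 1 by rewrite TT_lin TT_w0 Tg' mulr0 addr0.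
have hnn z : 0 <= h z.
  have -> : h z = w0 z + e * g' z by rewrite !ffunE.
  case Sz: (Sset alpha beta z).
  - have := He z Sz; rewrite ler_pdivlMr ?ltr_wpDl // => A.
    have B : - `|g' z| <= g' z by rewrite lerNl -normrN ler_norm.
    have C : e * (- `|g' z|) <= e * g' z by rewrite ler_wpM2l // ltW.
    have D := normr_ge0 (g' z).
    nra.
  - by rewrite W1 ?H1 ?Sz // mulr0 addr0.
have := SD _ (N_wj hN hT hnn) => Heq.
have g'0 : g' = 0.
  apply/ffunP => -[x y]; have := Heq x y; rewrite !ffunE /wtensor /= => /eqP.
  rewrite -subr_eq0 addrC addKr => /eqP; rewrite /GRing.scale /= => /eqP.
  by rewrite mulf_eq0 gt_eqF //= => /eqP.
have -> : g = T *: w0.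
  by apply/eqP; rewrite -subr_eq0 -scaleNr; apply/eqP; exact: g'0.
by rewrite memvZ // memv_line.
Qed.


Lemma TT_scale (h : FT) (k : R) : TT (k *: h) = k * TT h.
Proof.
rewrite -!sumTT; under eq_bigr do rewrite !ffunE.
by rewrite -mulr_sumr.
Qed.

Lemma main_iff : strongly_disjoint alpha beta <-> \dim W = 1%N.
Proof.
have w0W : w0 \in W by apply/inNP; exact: w0N.
have sW : (<[w0]> <= W)%VS by rewrite -memvE.
split.
- move=> SD; apply/eqP; rewrite eqn_leq; apply/andP; split.
  + by have := dimvS (W_sub SD); rewrite dim_vline w0_neq0.
  + by have := dimvS sW; rewrite dim_vline w0_neq0.
- move=> Hd ? ? g wj; have [gN gT] := wj_N wj.
  have gW : [ffun z => g z.1 z.2] \in W by apply/inNP.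
  have eqW : W = <[w0]>%VS.
    by apply/eqP; rewrite eq_sym eqEdim sW dim_vline w0_neq0 Hd.
  move: gW; rewrite eqW => /vlineP [k Hk].
  have k1 : k = 1 by move: gT; rewrite Hk TT_scale TT_w0 mulr1.
  move=> x y; move/ffunP: Hk => /(_ (x, y)).
  by rewrite /= !ffunE k1 scale1r /wtensor.
Qed.

End Proof.

Theorem proposition5p4 (R : realType) (U V : finType)
    (alpha : U -> U -> R) (beta : V -> V -> R)
    (hG : weight_function alpha) (hH : weight_function beta) :
  strongly_disjoint alpha beta <->
  \dim (joining_constraint_space alpha beta) = 1%N.
Proof. exact: main_iff. Qed.
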